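(* Let $G:\mathbb{N}\to\mathbb{R}$ satisfy $\lim_{k\to\infty}G(k)/k=0$ and $G(n)\ge0$ for all but finitely many $n$. Then for any $A\in\mathbb{N}$, the inequality $AG(n)-G(An)\ge0$ holds for infinitely many $n$. *)

(* Defs.v *)
From Stdlib Require Import Reals.

(* Main.v *)
Require Import Defs.
From Stdlib Require Import Reals.
Open Scope R_scope.
From Stdlib Require Import Lra Lia Classical.

Theorem lemma1 (G : nat -> R)
  (Hlim : Un_cv (fun k => G k / INR k) 0)
  (Hpos : exists N0 : nat, forall n : nat, (N0 <= n)%nat -> 0 <= G n)
  (A : nat) (HA : (1 <= A)%nat) :
  forall N : nat, exists n : nat, (N <= n)%nat /\ INR A * G n - G (A * n)%nat >= 0.
Proof.
  intros N.
  destruct (Nat.eq_dec A 1) as [->|HA2].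
  { exists N; split; [lia|]. rewrite Nat.mul_1_l. simpl. lra. }
  assert (HA1 : (1 < A)%nat) by lia.
  apply NNPP; intro Hn.
  assert (H : forall n, (N <= n)%nat -> INR A * G n < G (A * n)%nat).
  { intros n Hn'. apply Rnot_ge_lt. intro Hge. apply Hn. exists n; split; auto. lra. }
  clear Hn.
  destruct Hpos as [N0 HN0].
  set (n0 := (N + N0 + 1)%nat).
  set (m := (A * n0)%nat).
  assert (HAr : 1 < INR A) by (apply (lt_INR 1); lia).
  assert (Hc : 0 < G m).
  { unfold m. pose proof (H n0 ltac:(unfold n0; lia)). pose proof (HN0 n0 ltac:(unfold n0; lia)).
    nra. }
  assert (Hm : (1 <= m)%nat) by (unfold m, n0; nia).
  assert (HmN : (N <= m)%nat) by (unfold m, n0; nia).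
  assert (Hk : forall k, (1 <= A ^ k)%nat /\ INR (A ^ k) * G m <= G (A ^ k * m)%nat).
  { induction k as [|k [IH1 IH2]].
    - simpl. rewrite Nat.add_0_r. split; [lia|]. lra.
    - split. { simpl. nia. }
      assert (HN' : (N <= A ^ k * m)%nat) by nia.
      pose proof (H _ HN') as Hs.
      replace (A ^ S k * m)%nat with (A * (A ^ k * m))%nat by (simpl; lia).
      replace (INR (A ^ S k)) with (INR A * INR (A ^ k)) by (simpl; rewrite mult_INR; ring).
      nra. }
  assert (Hmr : 0 < INR m) by (apply (lt_INR 0); lia).
  destruct (Hlim (G m / INR m)) as [K HK].
  { apply Rdiv_lt_0_compat; lra. }
  destruct (Hk K) as [Hk1 Hk2].
  assert (HKle : (K <= A ^ K * m)%nat).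
  { pose proof (Nat.pow_gt_lin_r A K HA1). nia. }
  specialize (HK _ HKle). unfold R_dist in HK. rewrite Rminus_0_r in HK.
  rewrite mult_INR in HK.
  assert (Hpk : 1 <= INR (A ^ K)) by (apply (le_INR 1); lia).
  assert (Hq : G m / INR m <= G (A ^ K * m)%nat / (INR (A ^ K) * INR m)).
  { assert (Hp : 0 < INR (A ^ K) * INR m) by nra.
    replace (G (A ^ K * m)%nat / (INR (A ^ K) * INR m)) with (G (A ^ K * m)%nat * / (INR (A ^ K) * INR m)) by reflexivity.
    replace (G m / INR m) with ((INR (A ^ K) * G m) * / (INR (A ^ K) * INR m)) by (field; lra).
    apply Rmult_le_compat_r. left; apply Rinv_0_lt_compat; lra. lra. }
  pose proof (Rle_abs (G (A ^ K * m)%nat / (INR (A ^ K) * INR m))). lra.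
Qed.
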